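(* Let $G$ be a connected graph of order $n\geq 9$ with minimum degree $\delta(G)\geq\frac{n+k}{3}$ for some integer $k\geq 3$. Then $prc(G)=\chi'(G)$.
   Context: A path in an edge-coloured graph is a rainbow path if its edges receive pairwise distinct colours. The proper rainbow connection number $prc(G)$ of a connected graph is the minimum number of colours in a proper edge-colouring (adjacent edges get distinct colours) such that every two distinct vertices are joined by a rainbow path. $\chi'(G)$ is the chromatic index. *)

(* Defs.v *)
From mathcomp Require Import all_boot.
From Stdlib Require Import ClassicalEpsilon.
Set Implicit Arguments. Unset Strict Implicit. Unset Printing Implicit Defensive.

(* The least natural number satisfying P (arbitrary if none exists). *)
Definition least (P : nat -> Prop) : nat :=
  epsilon (inhabits 0%N) (fun m => P m /\ forall k, P k -> (m <= k)%N).

Section Graphs.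
Variable T : finType.
Variable e : rel T.

Definition simple_graph : Prop := symmetric e /\ irreflexive e.
Definition connected_graph : Prop := forall x y : T, connect e x y.
Definition degree (x : T) : nat := #|[set y | e x y]|.

(* An edge colouring with colours in 'I_m: c x y is the colour of edge xy
   (values on non-edges are irrelevant). It is proper if adjacent edges
   (edges sharing an endpoint) get distinct colours. *)
Definition proper_edge_colouring (m : nat) (c : T -> T -> 'I_m) : Prop :=
  (forall x y, e x y -> c x y = c y x) /\
  (forall x y z, e x y -> e x z -> y != z -> c x y != c x z).

Definition rainbow_path (m : nat) (c : T -> T -> 'I_m) (x y : T) (p : seq T) : Prop :=
  [/\ path e x p, last x p = y, uniq (x :: p) & uniq (pairmap c x p)].

Definition rainbow_connected (m : nat) (c : T -> T -> 'I_m) : Prop :=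
  forall x y, x != y -> exists p, rainbow_path c x y p.

Definition chromatic_index : nat :=
  least (fun m => exists c : T -> T -> 'I_m, proper_edge_colouring c).

Definition prc : nat :=
  least (fun m => exists c : T -> T -> 'I_m,
                    proper_edge_colouring c /\ rainbow_connected c).
End Graphs.

(* Main.v *)
Require Import Defs.
From mathcomp Require Import all_boot zify.
From Stdlib Require List.
From Stdlib Require Import FunctionalExtensionality PropExtensionality.
Set Implicit Arguments. Unset Strict Implicit. Unset Printing Implicit Defensive.

Lemma last_rev_belast (A : Type) (z : A) p : last (last z p) (rev (belast z p)) = z.
Proof. by case: p => [|y p] //=; rewrite rev_cons last_rcons. Qed.

Lemma pairmap_rev (A B : Type) (f : A -> A -> B) x p :
  pairmap f (last x p) (rev (belast x p)) = rev (pairmap (fun a b => f b a) x p).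
Proof.
elim: p x => [|z p IH] x //=.
rewrite rev_cons -cats1 pairmap_cat last_rev_belast IH /= rev_cons cats1 //.
Qed.

Lemma avoid (T : finType) (l : seq (pred T)) (A : {set T}) :
  size l < #|A| ->
  List.Forall (fun P : pred T => forall x y, x \in A -> y \in A -> P x -> P y -> x = y) l ->
  exists x, x \in A /\ all (fun P : pred T => ~~ P x) l.
Proof.
elim: l A => [|P l IH] A /= hs hF.
  have: A != set0 by rewrite -card_gt0.
  by case/set0Pn => x hx; exists x.
inversion hF as [|P' l' hP hl]; subst.
set A' := [set x in A | ~~ P x].
have h1 : #|[set x in A | P x]| <= 1.
  apply/card_le1_eqP => x y; rewrite !inE => /andP[xA Px] /andP[yA Py].
  exact: hP.
have h2 : #|A| = #|[set x in A | P x]| + #|A'|.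
  rewrite -(cardsID [set x | P x] A); congr (_ + _); apply: eq_card => x; rewrite !inE //.
  by rewrite andbC.
have [x [xA' hx]] : exists x, x \in A' /\ all (fun P : pred T => ~~ P x) l.
  apply: IH; first by rewrite h2 in hs; lia.
  apply: List.Forall_impl hl => Q hQ x y; rewrite !inE => /andP[xA _] /andP[yA _].
  exact: hQ.
move: xA'; rewrite inE => /andP[xA nPx].
by exists x; rewrite xA nPx hx.
Qed.

Section Main.
Variables (T : finType) (e : rel T).
Hypotheses (esym : symmetric e) (eirr : irreflexive e).
Variables (m : nat) (c : T -> T -> 'I_m).
Hypothesis csym : forall x y, e x y -> c x y = c y x.
Hypothesis cprop : forall x y z, e x y -> e x z -> y != z -> c x y != c x z.

Lemma pairmap_sym x p : path e x p -> pairmap (fun a b => c b a) x p = pairmap c x p.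
Proof.
elim: p x => [|z p IH] x //= /andP[h1 h2].
by rewrite IH // (csym h1).
Qed.

Lemma rainbow_rev x y p : rainbow_path e c x y p -> exists q, rainbow_path e c y x q.
Proof.
case=> hp hl hu hc; exists (rev (belast x p)); subst y; split.
- have ee : (fun a b => e b a) =2 e by move=> a b; exact: esym.
  by rewrite rev_path (eq_path ee).
- exact: last_rev_belast.
- by rewrite -rev_rcons -lastI rev_uniq.
- by rewrite pairmap_rev rev_uniq pairmap_sym.
Qed.
Hypothesis hdeg : forall x, #|T| + 3 <= 3 * degree e x.

Definition Nb x := [set y | e x y].
Definition Rs u v := [set x | ~~ e u x && ~~ e v x && (x != u) && (x != v)].

Lemma Rsym u v : Rs u v = Rs v u.
Proof. by apply/setP => x; rewrite !inE; do 2 case: (e _ x); do 2 case: (x == _). Qed.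

Lemma cinj x y z : e x y -> e x z -> c x y = c x z -> y = z.
Proof.
move=> h1 h2 h3; case: (eqVneq y z) => // /(cprop h1 h2); by rewrite h3 eqxx.
Qed.

Lemma cadj a b d : e a b -> e b d -> a != d -> c a b != c b d.
Proof. by move=> h1 h2 h3; rewrite csym //; apply: cprop => //; rewrite esym. Qed.

Lemma card3 (A B C D : {set T}) : D \subset A :|: B :|: C -> #|D| <= #|A| + #|B| + #|C|.
Proof.
move/subset_leq_card => h; apply: (leq_trans h).
apply: (leq_trans (leq_card_setU _ _).1); rewrite leq_add2r.
exact: (leq_card_setU _ _).1.
Qed.

Lemma card4 (A B C E D : {set T}) : D \subset A :|: B :|: C :|: E -> #|D| <= #|A| + #|B| + #|C| + #|E|.
Proof.
move/subset_leq_card => h; apply: (leq_trans h).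
apply: (leq_trans (leq_card_setU _ _).1); rewrite leq_add2r.
exact: card3.
Qed.

Lemma Rbound u v : u != v -> ~~ e u v -> (forall w, ~~ (e u w && e w v)) ->
  forall x, #|Rs u v| + 5 <= #|Nb x|.
Proof.
move=> huv nuv hcom x.
have hR : Rs u v = ~: ((Nb u :|: Nb v) :|: [set u; v]).
  by apply/setP => y; rewrite !inE !negb_or !andbA.
have h1 : #|Nb u :|: Nb v| = #|Nb u| + #|Nb v|.
  rewrite cardsU; suff -> : Nb u :&: Nb v = set0 by rewrite cards0 subn0.
  apply/setP => y; rewrite !inE (esym v y); exact/negbTE/hcom.
have h2 : #|(Nb u :|: Nb v) :|: [set u; v]| = #|Nb u :|: Nb v| + 2.
  rewrite cardsU cards2 huv; suff -> : (Nb u :|: Nb v) :&: [set u; v] = set0 by rewrite cards0 subn0.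
  apply/setP => y; rewrite !inE; case: (eqVneq y u) => [->|_]; first by rewrite eirr (esym v) (negbTE nuv).
  case: (eqVneq y v) => [->|_]; last by rewrite !andbF.
  by rewrite eirr (negbTE nuv).
have h3 := cardsC ((Nb u :|: Nb v) :|: [set u; v]).
rewrite -hR h2 h1 in h3.
have := hdeg u; have := hdeg v; have := hdeg x; rewrite /degree -!/(Nb _).
lia.
Qed.

Ltac solve_contra :=
  match goal with
  | Hirr : irreflexive ?r, H : is_true (?r ?x ?x) |- _ => by rewrite Hirr in H
  | H : is_true (?x != ?x) |- _ => by rewrite eqxx in H
  | H : is_true (~~ ?b), H' : is_true ?b |- _ => by rewrite H' in H
  | Hs : symmetric ?r, H : is_true (~~ ?r ?x ?y), H' : is_true (?r ?y ?x) |- _ => by rewrite Hs H' in H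
  | Hc : forall w, is_true (~~ (?r ?u w && ?r w ?v)), H1 : is_true (?r ?u ?w), H2 : is_true (?r ?w ?v) |- _ =>
      by move: (Hc w); rewrite H1 H2
  | Hs : symmetric ?r, Hc : forall w, is_true (~~ (?r ?u w && ?r w ?v)), H1 : is_true (?r ?u ?w), H2 : is_true (?r ?v ?w) |- _ =>
      by move: (Hc w); rewrite H1 Hs H2
  | Hs : symmetric ?r, Hc : forall w, is_true (~~ (?r ?u w && ?r w ?v)), H1 : is_true (?r ?w ?u), H2 : is_true (?r ?w ?v) |- _ =>
      by move: (Hc w); rewrite H2 Hs H1
  | Hs : symmetric ?r, Hc : forall w, is_true (~~ (?r ?u w && ?r w ?v)), H1 : is_true (?r ?w ?u), H2 : is_true (?r ?v ?w) |- _ =>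
      by move: (Hc w); rewrite Hs H1 Hs H2
  end.
Ltac neq := apply/eqP => ?; subst; solve_contra.
Ltac finrb := split; rewrite /= ?inE ?negb_or; repeat (apply/andP; split); solve [done | by rewrite eq_sym].

Lemma ucol_u (u : T) (B : {set T}) (g : 'I_m) x y :
  x \in Nb u :&: B -> y \in Nb u :&: B -> c u x == g -> c u y == g -> x = y.
Proof.
rewrite !inE => /andP[h1 _] /andP[h2 _] /eqP E1 /eqP E2.
by apply: (cinj h1 h2); rewrite E1 E2.
Qed.

Lemma b0bound u v b0 : u != v -> ~~ e u v -> (forall w, ~~ (e u w && e w v)) -> e v b0 ->
  4 <= #|Nb u :&: Nb b0| + #|Nb v :&: Nb b0|.
Proof.
move=> huv nuv hcom hb0.
have hR := Rbound huv nuv hcom b0.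
have : Nb b0 \subset (Nb u :&: Nb b0) :|: (Nb v :&: Nb b0) :|: [set v] :|: Rs u v.
  apply/subsetP => y; rewrite !inE => hy; rewrite hy /= !andbT.
  case: (eqVneq y v) => [E|yv]; first by rewrite !orbT.
  case: (eqVneq y u) => [E|yu]; first by subst y; move: (hcom b0); rewrite (esym u) hy (esym b0) hb0.
  by case: (e u y); case: (e v y).
move/card4; rewrite cards1; lia.
Qed.

Lemma caseA u v a0 b0 : u != v -> ~~ e u v -> (forall w, ~~ (e u w && e w v)) ->
  e u a0 -> e v b0 -> e a0 b0 -> exists p, rainbow_path e c u v p.
Proof.
move=> huv nuv hcom ha0 hb0 hab.
have hb := b0bound huv nuv hcom hb0.
have b0v : e b0 v by rewrite esym.
have ub0 : u != b0 by neq.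
have a0v : a0 != v by neq.
have b0vn : b0 != v by neq.
have a0b0 : a0 != b0 by neq.
have ua0 : u != a0 by neq.
case: (leqP 2 #|Nb u :&: Nb b0|) => hp.
  have [a [aA hca]] := @avoid _ [:: (fun a => c u a == c v b0)] (Nb u :&: Nb b0) hp
    (List.Forall_cons _ (@ucol_u u (Nb b0) (c v b0)) (List.Forall_nil _)).
  move: hca; rewrite /= andbT; move: aA; rewrite !inE => /andP[ha hba] hca.
  have hab0 : e a b0 by rewrite esym.
  have ua : u != a by neq.
  have ab0 : a != b0 by neq.
  have av : a != v by neq.
  have c1 := cadj ha hab0 ub0.
  have c2 := cadj hab0 b0v av.
  have c3 : c u a != c b0 v by rewrite -(csym hb0).
  exists [:: a; b0; v]; finrb.
have hq : 2 <= #|Nb v :&: Nb b0| by lia.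
case: (eqVneq (c u a0) (c v b0)) => hc; last first.
  have c1 := cadj ha0 hab (ub0).
  have c2 := cadj hab b0v a0v.
  have c3 : c u a0 != c b0 v by rewrite -(csym hb0).
  exists [:: a0; b0; v]; finrb.
have [b [bA hcb]] := @avoid _ [:: (fun b => c v b == c b0 a0)] (Nb v :&: Nb b0) hq
    (List.Forall_cons _ (@ucol_u v (Nb b0) (c b0 a0)) (List.Forall_nil _)).
move: hcb; rewrite /= andbT; move: bA; rewrite !inE => /andP[hvb hbb] hcb.
have b0b : e b0 b by [].
have bv : e b v by rewrite esym.
have ub : u != b by neq.
have a0b : a0 != b by neq.
have b0bn : b0 != b by neq.
have bvn : b != v by neq.
have c1 := cadj ha0 hab ub0.
have c2 := cadj hab b0b a0b.
have c3 := cadj b0b bv b0vn.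
have c4 : c u a0 != c b0 b by rewrite hc (csym hb0); apply: cprop => //; rewrite eq_sym.
have c5 : c u a0 != c b v by rewrite hc -(csym hvb); apply: cprop => //; rewrite eq_sym.
have c6 : c a0 b0 != c b v by rewrite (csym hab) -(csym hvb) eq_sym.
exists [:: a0; b0; b; v]; finrb.
Qed.

Lemma ucol_r (w : T) (B : {set T}) (g : 'I_m) x y :
  x \in B :&: Nb w -> y \in B :&: Nb w -> c w x == g -> c w y == g -> x = y.
Proof.
rewrite !inE => /andP[_ h1] /andP[_ h2] /eqP E1 /eqP E2.
by apply: (cinj h1 h2); rewrite E1 E2.
Qed.

Lemma inRs u v x : (x \in Rs u v) = [&& ~~ e u x, ~~ e v x, x != u & x != v].
Proof. by rewrite inE !andbA. Qed.

Lemma PQ6 u v w : u != v -> ~~ e u v -> (forall w, ~~ (e u w && e w v)) -> w \in Rs u v ->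
  6 <= #|Nb u :&: Nb w| + #|Nb v :&: Nb w|.
Proof.
move=> huv nuv hcom hw.
have hR := Rbound huv nuv hcom w.
have hD := cardsD1 w (Rs u v); rewrite hw in hD.
move: hw; rewrite inRs => /and4P[nuw nvw wu wv].
have : Nb w \subset (Nb u :&: Nb w) :|: (Nb v :&: Nb w) :|: (Rs u v :\ w).
  apply/subsetP => y; rewrite !inE => hy; rewrite hy /= !andbT.
  case: (eqVneq y u) => [E|yu]; first by subst y; rewrite esym hy in nuw.
  case: (eqVneq y v) => [E|yv]; first by subst y; rewrite esym hy in nvw.
  case: (eqVneq y w) => [E|yw]; first by subst y; rewrite eirr in hy.
  by case: (e u y); case: (e v y).
move/card3; lia.
Qed.

Lemma aNbound u v a : u != v -> ~~ e u v -> (forall w, ~~ (e u w && e w v)) ->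
  (forall x y, e u x -> e v y -> ~~ e x y) -> e u a -> 4 <= #|Nb u :&: Nb a|.
Proof.
move=> huv nuv hcom noNM ha.
have hR := Rbound huv nuv hcom a.
have : Nb a \subset (Nb u :&: Nb a) :|: [set u] :|: Rs u v.
  apply/subsetP => y; rewrite !inE => hy; rewrite hy /= !andbT.
  case: (eqVneq y u) => [E|yu]; first by rewrite orbT.
  case: (eqVneq y v) => [E|yv]; first by subst y; move: (hcom a); rewrite ha hy.
  case: (boolP (e v y)) => hvy; first by move: (noNM _ _ ha hvy); rewrite hy.
  by case: (e u y).
move/card3; rewrite cards1; lia.
Qed.

Lemma B1q u v w : u != v -> ~~ e u v -> (forall w, ~~ (e u w && e w v)) ->
  (forall x y, e u x -> e v y -> ~~ e x y) -> w \in Rs u v ->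
  1 <= #|Nb u :&: Nb w| -> 3 <= #|Nb v :&: Nb w| -> exists p, rainbow_path e c u v p.
Proof.
move=> huv nuv hcom noNM hw hp hq.
move: (hw); rewrite inRs => /and4P[nuw nvw wu wv].
have [a [aA _]] := @avoid _ [::] (Nb u :&: Nb w) hp (List.Forall_nil _).
move: aA; rewrite !inE => /andP[ha hwa].
have [b [bA hcb]] := @avoid _ [:: (fun b => c v b == c w a); (fun b => c w b == c u a)] (Nb v :&: Nb w) hq
    (List.Forall_cons _ (@ucol_u v (Nb w) (c w a))
     (List.Forall_cons _ (@ucol_r w (Nb v) (c u a)) (List.Forall_nil _))).
move: hcb; rewrite /= andbT => /andP[hcb1 hcb2].
move: bA; rewrite !inE => /andP[hb hwb].
have haw : e a w by rewrite esym.
have hbv : e b v by rewrite esym.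
have ua : u != a by neq.
have uw : u != w by neq.
have ub : u != b by neq.
have aw : a != w by neq.
have ab : a != b by neq.
have av : a != v by neq.
have wb : w != b by neq.
have bv : b != v by neq.
have k1 := cadj ha haw uw.
have k2 : c a w != c w b by rewrite (csym haw); apply: cprop.
have k3 := cadj hwb hbv wv.
have k4 : c a w != c b v by rewrite (csym haw) (csym hbv) eq_sym.
have k5 : c u a != c w b by rewrite eq_sym.
case: (eqVneq (c u a) (c v b)) => hc; last first.
  have k6 : c u a != c b v by rewrite (csym hbv).
  exists [:: a; w; b; v]; finrb.
have hN := aNbound huv nuv hcom noNM ha.
have [x [xA hcx]] := @avoid _ [:: (fun x => c u x == c w a); (fun x => c u x == c w b); (fun x => c a x == c w b)]
    (Nb u :&: Nb a) hN
    (List.Forall_cons _ (@ucol_u u (Nb a) (c w a))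
     (List.Forall_cons _ (@ucol_u u (Nb a) (c w b))
      (List.Forall_cons _ (@ucol_r a (Nb u) (c w b)) (List.Forall_nil _)))).
move: hcx; rewrite /= andbT => /and3P[hx1 hx2 hx3].
move: xA; rewrite !inE => /andP[hx hax].
have hxa : e x a by rewrite esym.
have ux : u != x by neq.
have xa : x != a by neq.
have xw : x != w by neq.
have xb : x != b by neq.
have xv : x != v by neq.
have l1 := cadj hx hxa ua.
have l2 : c u x != c a w by rewrite (csym haw).
have l3 : c u x != c b v by rewrite (csym hbv) -hc; apply: cprop.
have l4 := cadj hxa haw xw.
have l5 : c x a != c w b by rewrite (csym hxa).
have l6 : c x a != c b v.
  rewrite (csym hxa) (csym hbv) -hc (csym ha); apply: cprop => //; first by rewrite esym.
  by rewrite eq_sym.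
exists [:: x; a; w; b; v]; finrb.
Qed.

Lemma B1 u v w : u != v -> ~~ e u v -> (forall w, ~~ (e u w && e w v)) ->
  (forall x y, e u x -> e v y -> ~~ e x y) -> w \in Rs u v ->
  1 <= #|Nb u :&: Nb w| -> 1 <= #|Nb v :&: Nb w| -> exists p, rainbow_path e c u v p.
Proof.
move=> huv nuv hcom noNM hw hp hq.
have h6 := PQ6 huv nuv hcom hw.
case: (leqP 3 #|Nb v :&: Nb w|) => hq3; first exact: (B1q huv nuv hcom noNM hw hp hq3).
have [q hq'] : exists q, rainbow_path e c v u q.
  apply: (@B1q v u w).
  - by rewrite eq_sym.
  - by rewrite esym.
  - by move=> z; rewrite andbC (esym v) (esym z); apply: hcom.
  - by move=> x y hx hy; rewrite esym; apply: noNM.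
  - by rewrite Rsym.
  - exact: hq.
  - lia.
exact: rainbow_rev hq'.
Qed.

Lemma B2 u v s t : u != v -> ~~ e u v -> (forall w, ~~ (e u w && e w v)) ->
  s \in Rs u v -> t \in Rs u v -> e s t ->
  6 <= #|Nb u :&: Nb s| -> 6 <= #|Nb v :&: Nb t| -> exists p, rainbow_path e c u v p.
Proof.
move=> huv nuv hcom hs ht hst hp hq.
move: (hs); rewrite inRs => /and4P[nus nvs su sv].
move: (ht); rewrite inRs => /and4P[nut nvt tu tv].
have hq1 : 1 < #|Nb v :&: Nb t| by apply: leq_trans hq.
have [b [bA hcb]] := @avoid _ [:: (fun b => c v b == c s t)] (Nb v :&: Nb t) hq1
    (List.Forall_cons _ (@ucol_u v (Nb t) (c s t)) (List.Forall_nil _)).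
move: hcb; rewrite /= andbT => hcb.
move: bA; rewrite !inE => /andP[hb htb].
have [a [aA hca]] := @avoid _ [:: (fun a => c u a == c s t); (fun a => c u a == c t b); (fun a => c u a == c v b);
    (fun a => c s a == c t b); (fun a => c s a == c v b)] (Nb u :&: Nb s) hp
    (List.Forall_cons _ (@ucol_u u (Nb s) (c s t))
    (List.Forall_cons _ (@ucol_u u (Nb s) (c t b))
    (List.Forall_cons _ (@ucol_u u (Nb s) (c v b))
    (List.Forall_cons _ (@ucol_r s (Nb u) (c t b))
    (List.Forall_cons _ (@ucol_r s (Nb u) (c v b)) (List.Forall_nil _)))))).
move: hca; rewrite /= andbT => /and5P[h1 h2 h3 h4 h5].
move: aA; rewrite !inE => /andP[ha hsa].
have has : e a s by rewrite esym.
have hbv : e b v by rewrite esym.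
have ua : u != a by neq.
have us : u != s by neq.
have ut : u != t by neq.
have ub : u != b by neq.
have as_ : a != s by neq.
have at_ : a != t by neq.
have ab : a != b by neq.
have av : a != v by neq.
have st : s != t by neq.
have sb : s != b by neq.
have tb : t != b by neq.
have bv : b != v by neq.
have k1 := cadj ha has us.
have k2 := cadj has hst at_.
have k3 := cadj hst htb sb.
have k4 := cadj htb hbv tv.
have k5 : c u a != c b v by rewrite (csym hbv).
have k6 : c a s != c t b by rewrite (csym has).
have k7 : c a s != c b v by rewrite (csym has) (csym hbv).
have k8 : c s t != c b v by rewrite (csym hbv) eq_sym.
exists [:: a; s; t; b; v]; finrb.
Qed.

Lemma cross (S : {set T}) x y : connect e x y -> x \in S -> y \notin S ->
  exists s t, [/\ s \in S, t \notin S & e s t].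
Proof.
case/connectP => p hp ->; elim: p x hp => [|z p IH] x /=.
  by move=> _ hx; rewrite hx.
move=> /andP[hxz hp] hx hy.
case: (boolP (z \in S)) => hz; first exact: (IH z hp hz hy).
by exists x, z.
Qed.

Lemma rc_main u v : connect e u v -> u != v -> exists p, rainbow_path e c u v p.
Proof.
move=> hconn huv.
case: (boolP (e u v)) => euv.
  exists [:: v]; split => //=; rewrite ?euv ?inE ?andbT //.
case: (boolP [exists w, e u w && e w v]) => [/existsP [w /andP[h1 h2]] | hno].
  have k := cadj h1 h2 huv.
  have uw : u != w by neq.
  have wv : w != v by neq.
  exists [:: w; v]; finrb.
have hcom : forall w, ~~ (e u w && e w v).
  by move=> w; apply: contra hno => h; apply/existsP; exists w.
case: (boolP [exists a, exists b, e u a && e v b && e a b]) => [|hno2].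
  case/existsP => a /existsP [b /andP[/andP[h1 h2] h3]].
  exact: (caseA huv euv hcom h1 h2 h3).
have noNM : forall x y, e u x -> e v y -> ~~ e x y.
  move=> x y hx hy; apply: contra hno2 => h; apply/existsP; exists x; apply/existsP; exists y.
  by rewrite hx hy h.
pose S := [set x | (x == u) || e u x || ((x \in Rs u v) && (#|Nb v :&: Nb x| == 0))].
have uS : u \in S by rewrite inE eqxx.
have vS : v \notin S.
  by rewrite inE eq_sym (negbTE huv) (negbTE euv) inRs eqxx !andbF.
have [s [t [hs ht hst]]] := cross hconn uS vS.
have inS : forall x, (x \in S) = (x == u) || e u x || ((x \in Rs u v) && (#|Nb v :&: Nb x| == 0)).
  by move=> x; rewrite !inE.
move: hs ht; rewrite !inS.
case: (eqVneq s u) => [E|su] /=.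
  by subst s; rewrite hst orbT.
case: (boolP (e u s)) => eus /=.
  case: (eqVneq t u) => [E|tu] /=; first by [].
  case: (boolP (e u t)) => eut //= _.
  have tR : t \in Rs u v.
    rewrite inRs eut tu /=.
    case: (eqVneq t v) => [E|tv]; first by subst t; move: (hcom s); rewrite eus hst.
    rewrite ?andbT; apply/negP => evt; by move: (noNM _ _ eus evt); rewrite hst.
  rewrite tR /= => hQ.
  apply: (B1 huv euv hcom noNM tR); last by rewrite lt0n.
  by rewrite card_gt0; apply/set0Pn; exists s; rewrite !inE eus esym.
move=> /andP[sR hQs].
case: (eqVneq t u) => [E|tu] /=; first by subst t; rewrite esym hst in eus.
case: (boolP (e u t)) => eut //= hnt.
move: (sR); rewrite inRs => /and4P[_ nvs _ sv].
have tR : t \in Rs u v.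
  rewrite inRs eut tu /=.
  case: (eqVneq t v) => [E|tv]; first by subst t; rewrite esym hst in nvs.
  rewrite andbT; apply/negP => evt.
  move: hQs; rewrite cards_eq0 => /eqP/setP/(_ t); rewrite !inE evt hst.
  done.
move: hnt; rewrite tR /= => hQ.
have hQ1 : 1 <= #|Nb v :&: Nb t| by rewrite lt0n.
case: (leqP 1 #|Nb u :&: Nb t|) => hP.
  exact: (B1 huv euv hcom noNM tR hP hQ1).
have h6t := PQ6 huv euv hcom tR.
have h6s := PQ6 huv euv hcom sR.
move/eqP: hQs => hQs.
apply: (B2 huv euv hcom sR tR hst); [clear -h6s hQs | clear -h6t hP]; lia.
Qed.

End Main.

Lemma least_ext (P Q : nat -> Prop) : (forall n, P n <-> Q n) -> least P = least Q.
Proof.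
move=> h.
have -> : P = Q.
  apply: functional_extensionality => n.
  exact: propositional_extensionality.
by [].
Qed.
Theorem proposition5p12 (T : finType) (e : rel T) (k : nat) :
  simple_graph e -> connected_graph e ->
  (9 <= #|T|)%N -> (3 <= k)%N ->
  (forall x : T, (#|T| + k <= 3 * degree e x)%N) ->
  prc e = chromatic_index e.
Proof.
move=> [hsym hirr] hconn hn hk hdeg.
have hdeg3 : forall x, #|T| + 3 <= 3 * degree e x.
  by move=> x; apply: leq_trans (hdeg x); rewrite leq_add2l.
rewrite /prc /chromatic_index; apply: least_ext => n; split.
  by case=> col [hp _]; exists col.
case=> col hp; exists col; split => //.
case: hp => h1 h2 x y hxy.
exact: (rc_main hsym hirr h1 h2 hdeg3 (hconn x y) hxy).
Qed.
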